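(* Let $1\le p<d\le n$. Let $C_n(k)$ be the right $Y_n$-comodules of the context, and let $C_n(d-p;\,d-p,\,p)\subseteq C_n(d-p)\otimes C_n(p)$ be the span of the coefficients of all powers of $v^{-1}$ in the series $\tilde f_I(v+d-p)\otimes\tilde f_\Lambda(v)$, for $I\in\binom{[n]}{d-p}$ and $\Lambda\in\binom{[n]}p$. This is a subcomodule of the tensor product comodule. Let $\mu:C_n(d-p;\,d-p,\,p)\to C_n(d)$ be the map given by $$\tilde f_I(u+d-p)\otimes\tilde f_\Lambda(u)\mapsto\tilde f_{I|\Lambda}(u+d-p),$$ i.e. the coefficient of $u^{-r}$ on the left is sent to the coefficient of $u^{-r}$ on the right. Then $\mu$ is a morphism of right $Y_n$-comodules.
   Context: $Y_n$ is the Yangian: the complex associative unital algebra with generators $t^{(r)}_{ij}$ ($1\le i,j\le n$, $r\ge1$) and relations $[t_{ij}^{(r+1)},t_{kl}^{(s)}]-[t_{ij}^{(r)},t_{kl}^{(s+1)}]=t_{kj}^{(r)}t_{il}^{(s)}-t_{kj}^{(s)}t_{il}^{(r)}$ ($r,s\ge0$, $t^{(0)}_{ij}=\delta_{ij}$). Put $t_{ij}(u)=\delta_{ij}+\sum_{r\ge1}t^{(r)}_{ij}u^{-r}$, with coproduct $\Delta(t_{ij}(u))=\sum_kt_{ik}(u)\otimes t_{kj}(u)$. The Yangian minor is $$t^I_J(u)=\sum_{\sigma\in\mathfrak S_d}\operatorname{sgn}(\sigma)\,t_{i_{\sigma(1)}j_1}(u)\,t_{i_{\sigma(2)}j_2}(u-1)\cdots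 t_{i_{\sigma(d)}j_d}(u-d+1).$$ Shifts $g(u+a)$ are obtained by expanding $(u+a)^{-r}$ in powers of $u^{-1}$. $C_n(k)$ is the complex vector space spanned by $\tilde f^{(r)}_I$ ($I\in[n]^k$, $r\ge0$) modulo the coefficients of $\tilde f_{\sigma I}(u)=\operatorname{sgn}(\sigma)\tilde f_I(u)$ ($\sigma\in\mathfrak S_k$), where $\tilde f_I(u)=\sum_{r\ge0}\tilde f_I^{(r)}u^{-r}$. It is a right $Y_n$-comodule via $\rho(\tilde f_I(u))=\sum_{K\in\binom{[n]}k}\tilde f_K(u)\otimes t^K_I(u)$. Tensor products carry the structure $\rho(x\otimes y)=\sum x_{(0)}\otimes y_{(0)}\otimes x_{(1)}y_{(1)}$. $I|\Lambda$ denotes concatenation of the increasing listings of $I$ and $\Lambda$. *)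

(* Defs.v *)
From HB Require Import structures.
From mathcomp Require Import all_boot all_order all_algebra all_fingroup.
Set Implicit Arguments. Unset Strict Implicit. Unset Printing Implicit Defensive.
Import Order.TTheory GRing.Theory Num.Theory.
Local Open Scope ring_scope.

(* Conventions.
   - Indices of [n] are 0,...,n-1 (natural numbers < n).
   - A formal series  g(u) = sum_{r>=0} g^(r) u^{-r}  is its coefficient
     function  g : nat -> A,  g r = g^(r).
   - The Yangian generators are modelled by a family  t : nat -> nat -> nat -> A
     in a F-algebra A,  t r i j = t_{ij}^{(r)}  (r >= 1), satisfying the
     defining relations of Y_n (universal property of Y_n).
   - C_n(k) is modelled through its basis f~_K^{(r)}, K an r-subset of [n]
     ({set 'I_n} with #|K| = k), listed increasingly; an element of
     C_n(k) (x) A is its coefficient function  K -> r -> A, an element of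
     C_n(k1) (x) C_n(k2) (x) A is a function  K1 -> r1 -> K2 -> r2 -> A. *)

Section Yangian.
Variable A : pzRingType.

Definition tco (t : nat -> nat -> nat -> A) (r i j : nat) : A :=
  if r == 0%N then (i == j)%:R else t r i j.

Definition yangian_rel (n : nat) (t : nat -> nat -> nat -> A) : Prop :=
  forall (r s i j k l : nat), (i < n)%N -> (j < n)%N -> (k < n)%N -> (l < n)%N ->
    (tco t r.+1 i j * tco t s k l - tco t s k l * tco t r.+1 i j)
    - (tco t r i j * tco t s.+1 k l - tco t s.+1 k l * tco t r i j)
    = tco t r k j * tco t s i l - tco t s k j * tco t r i l.

(* coefficient of u^{-(r+j)} in (u+a)^{-r}:  (-1)^j C(r+j-1,j) a^j
   (equal to delta_{j0} when r = 0, thanks to truncated subtraction) *)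
Definition csh (a : int) (r j : nat) : int :=
  (-1) ^+ j * ('C((r + j).-1, j))%:Z * a ^+ j.

(* the series g(u+a) *)
Definition shift (a : int) (g : nat -> A) (m : nat) : A :=
  \sum_(r < m.+1) g r * (csh a r (m - r))%:~R.

Definition mulser (g h : nat -> A) (m : nat) : A :=
  \sum_(i < m.+1) g i * h (m - i)%N.

Definition oneser (m : nat) : A := (m == 0%N)%:R.

Definition minor (t : nat -> nat -> nat -> A) (I J : seq nat) (m : nat) : A :=
  \sum_(s : 'S_(size J))
     (-1) ^+ odd_perm s *
        (\big[mulser/oneser]_(k < size J)
            shift (- (k : nat)%:Z) (fun r => tco t r (nth 0%N I (s k)) (nth 0%N J k))) m.

Definition setseq (n : nat) (K : {set 'I_n}) : seq nat := map val (enum K).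

(* rho(f~_J^{(r)}) in C_n(k) (x) A, from rho(f~_J(u)) = sum_K f~_K(u) (x) t^K_J(u) *)
Definition rhoC (n k : nat) (t : nat -> nat -> nat -> A) (J : seq nat) (r : nat)
  (K : {set 'I_n}) (s : nat) : A :=
  if (#|K| == k) && (s <= r)%N then minor t (setseq K) J (r - s) else 0.

Definition rhoCC (n k1 k2 : nat) (t : nat -> nat -> nat -> A)
  (J1 : seq nat) (r1 : nat) (J2 : seq nat) (r2 : nat)
  (K1 : {set 'I_n}) (s1 : nat) (K2 : {set 'I_n}) (s2 : nat) : A :=
  rhoC k1 t J1 r1 K1 s1 * rhoC k2 t J2 r2 K2 s2.

(* rho of g_{I,L,m} := coefficient of v^{-m} in f~_I(v+a) (x) f~_L(v)
   = sum_{s<=m} sum_{r<=m-s} csh a r (m-s-r) f~_I^(r) (x) f~_L^(s) *)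
Definition rho_g (n k1 k2 : nat) (t : nat -> nat -> nat -> A) (a : int)
  (I L : {set 'I_n}) (m : nat)
  (K1 : {set 'I_n}) (s1 : nat) (K2 : {set 'I_n}) (s2 : nat) : A :=
  \sum_(s < m.+1) \sum_(r < (m - s).+1)
     (csh a r (m - s - r))%:~R *
     rhoCC k1 k2 t (setseq I) r (setseq L) s K1 s1 K2 s2.

(* rho of h_{J,m} := coefficient of u^{-m} in f~_J(u+a) *)
Definition rho_h (n k : nat) (t : nat -> nat -> nat -> A) (a : int)
  (J : seq nat) (m : nat) (K : {set 'I_n}) (s : nat) : A :=
  \sum_(r < m.+1) (csh a r (m - r))%:~R * rhoC k t J r K s.

End Yangian.

Definition inversions (J : seq nat) : nat :=
  \sum_(i < size J) \sum_(j < size J)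
     ((i < j)%N && (nth 0%N J j < nth 0%N J i)%N : nat).

(* coordinates (integers) of f~_J^{(r)} on the basis f~_K^{(r)}:
   f~_J = sgn * f~_K if J is a permutation of the increasing listing of K,
   and 0 if J has a repeated entry (antisymmetry relations of C_n(k)) *)
Definition fco (n : nat) (K : {set 'I_n}) (J : seq nat) : int :=
  if perm_eq (setseq K) J then (-1) ^+ inversions J else 0.

(* coordinates of g_{I,L,m} (coefficient of v^{-m} in f~_I(v+a) (x) f~_L(v))
   on the basis f~_K^{(r)} (x) f~_L'^{(s)} *)
Definition gco (n : nat) (a : int) (I L : {set 'I_n}) (m : nat)
  (K : {set 'I_n}) (r : nat) (L' : {set 'I_n}) (s : nat) : int :=
  if (K == I) && (L' == L) && (r + s <= m)%N then csh a r (m - s - r) else 0.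

(* coordinates of h_{J,m} (coefficient of u^{-m} in f~_J(u+a)) on the basis
   f~_K^{(r)} *)
Definition hco (n : nat) (a : int) (J : seq nat) (m : nat)
  (K : {set 'I_n}) (r : nat) : int :=
  if (r <= m)%N then csh a r (m - r) * fco K J else 0.

Section Sums.
Variable A : pzRingType.
(* sum_{I,L,m'<N} g_{I,L,m'} (x) c(I,L,m')  in C(k1) (x) C(k2) (x) A *)
Definition sum_g (n k1 k2 : nat) (a : int) (N : nat)
  (c : {set 'I_n} -> {set 'I_n} -> nat -> A)
  (K1 : {set 'I_n}) (s1 : nat) (K2 : {set 'I_n}) (s2 : nat) : A :=
  \sum_(I : {set 'I_n} | #|I| == k1) \sum_(L : {set 'I_n} | #|L| == k2)
    \sum_(m < N) (gco a I L m K1 s1 K2 s2)%:~R * c I L m.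

(* (mu (x) id)(sum_{I,L,m'<N} g_{I,L,m'} (x) c(I,L,m'))
   = sum h_{I|L,m'} (x) c(I,L,m')  in C(k1+k2) (x) A *)
Definition sum_h (n k1 k2 : nat) (a : int) (N : nat)
  (c : {set 'I_n} -> {set 'I_n} -> nat -> A)
  (K : {set 'I_n}) (s : nat) : A :=
  \sum_(I : {set 'I_n} | #|I| == k1) \sum_(L : {set 'I_n} | #|L| == k2)
    \sum_(m < N) (hco a (setseq I ++ setseq L) m K s)%:~R * c I L m.
End Sums.

(* Main.v *)
Require Import Defs.
From HB Require Import structures.
From mathcomp Require Import all_boot all_order all_algebra all_fingroup.
From mathcomp Require Import ring zify.
From Stdlib Require Import FunctionalExtensionality.
Set Implicit Arguments. Unset Strict Implicit. Unset Printing Implicit Defensive.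
Import GRing.Theory.
Local Open Scope ring_scope.

Lemma sum_widen (V : nmodType) n N (F : nat -> V) : (n <= N)%N ->
  (forall k, (n <= k)%N -> (k < N)%N -> F k = 0) ->
  \sum_(k < n) F k = \sum_(k < N) F k.
Proof.
move=> hn hF; rewrite (big_ord_widen N F hn) big_mkcond /=.
apply: eq_bigr => k _; case: ifP => // /negbT; rewrite -leqNgt => h.
by rewrite hF.
Qed.

Lemma tri_aux (V : nmodType) (H : nat -> V) i M : (i <= M)%N ->
  \sum_(r < M) (if (i <= r)%N then H (r - i)%N else 0) = \sum_(k < M - i) H k.
Proof.
elim: M => [|M IH]; first by rewrite leqn0 => /eqP ->; rewrite !big_ord0.
rewrite leq_eqVlt => /orP [/eqP ->|hi].
  rewrite subnn big_ord0 big1 // => r _; rewrite leqNgt ltn_ord //.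
rewrite ltnS in hi; rewrite big_ord_recr /= IH // hi subSn // big_ord_recr /=.
done.
Qed.

Lemma tri (V : nmodType) M (F : nat -> nat -> V) :
  (forall i k, (M <= i + k)%N -> F i k = 0) ->
  \sum_(r < M) \sum_(i < r.+1) F i (r - i)%N = \sum_(i < M) \sum_(k < M) F i k.
Proof.
move=> hF.
have e1 : forall r : 'I_M, \sum_(i < r.+1) F i (r - i)%N =
   \sum_(i < M) (if (i <= r)%N then F i (r - i)%N else 0).
  move=> r; rewrite (big_ord_widen M (fun i => F i (r - i)%N) (ltn_ord r)).
  by rewrite big_mkcond.
rewrite (eq_bigr _ (fun r _ => e1 r)) exchange_big /=.
apply: eq_bigr => i _.
rewrite (tri_aux (F i)) ?(ltnW (ltn_ord i)) //.
apply: sum_widen; first exact: leq_subr.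
move=> k hk _; apply: hF; rewrite -(leq_add2l i) subnKC in hk => //.
exact: ltnW (ltn_ord i).
Qed.

Section Series.
Variable R : nzRingType.
Implicit Types f g h : nat -> R.

Definition Tp f M : {poly R} := \poly_(i < M) f i.

Lemma mulser_poly f g m M : (m < M)%N -> mulser f g m = (Tp f M * Tp g M)`_m.
Proof.
move=> hm; rewrite coefM /mulser; apply: eq_bigr => i _.
rewrite !coef_poly.
have -> : (i < M)%N by apply: leq_ltn_trans hm; rewrite -ltnS.
by have -> : (m - i < M)%N by apply: leq_ltn_trans hm; exact: leq_subr.
Qed.

Lemma coefM_extl (p q r : {poly R}) m : (forall i, (i <= m)%N -> p`_i = q`_i) ->
  (p * r)`_m = (q * r)`_m.
Proof. by move=> h; rewrite !coefM; apply: eq_bigr => i _; rewrite h // -ltnS. Qed.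

Lemma coefM_extr (p q r : {poly R}) m : (forall i, (i <= m)%N -> p`_i = q`_i) ->
  (r * p)`_m = (r * q)`_m.
Proof. by move=> h; rewrite !coefM; apply: eq_bigr => i _; rewrite h // leq_subr. Qed.

Lemma mulserA : associative (@mulser R).
Proof.
move=> f g h; apply: functional_extensionality => m.
rewrite (mulser_poly (mulser f g) h (ltnSn m)) (mulser_poly f (mulser g h) (ltnSn m)).
rewrite (coefM_extl (p := Tp (mulser f g) m.+1) (q := Tp f m.+1 * Tp g m.+1)); last first.
  by move=> i hi; rewrite coef_poly ltnS hi (mulser_poly f g (leq_ltn_trans hi (ltnSn m))).
rewrite (coefM_extr (p := Tp (mulser g h) m.+1) (q := Tp g m.+1 * Tp h m.+1)); last first.
  by move=> i hi; rewrite coef_poly ltnS hi (mulser_poly g h (leq_ltn_trans hi (ltnSn m))).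
by rewrite mulrA.
Qed.

Lemma mul1ser : left_id (@oneser R) (@mulser R).
Proof.
move=> f; apply: functional_extensionality => m.
rewrite /mulser big_ord_recl /= /oneser eqxx mul1r subn0 big1 ?addr0 // => i _.
by rewrite /bump /= mul0r.
Qed.

Lemma mulser1 : right_id (@oneser R) (@mulser R).
Proof.
move=> f; apply: functional_extensionality => m.
rewrite /mulser big_ord_recr /= /oneser subnn eqxx mulr1 big1 ?add0r // => i _.
by rewrite subn_eq0 leqNgt ltn_ord mulr0.
Qed.

End Series.

HB.instance Definition _ (R : nzRingType) :=
  Monoid.isLaw.Build (nat -> R) (@oneser R) (@mulser R) (@mulserA R) (@mul1ser R) (@mulser1 R).


Definition Eco (a : int) (r j : nat) : int :=
  if (r <= j)%N then csh a r (j - r) else 0.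

Lemma Eco_0l a j : Eco a 0 j = (j == 0%N)%:R.
Proof.
rewrite /Eco /csh /=; case: j => [|j] /=; first by rewrite !expr0 bin0 !mul1r.
by rewrite bin_small // mulr0 mul0r.
Qed.

Lemma Eco_0r a r : Eco a r.+1 0 = 0.
Proof. by []. Qed.

Lemma Eco_small a r j : (j < r)%N -> Eco a r j = 0.
Proof. by rewrite /Eco ltnNge => /negbTE ->. Qed.

Lemma Eco_rec a r m : Eco a r.+1 m.+1 = Eco a r m - a * Eco a r.+1 m.
Proof.
rewrite /Eco ltnS; case: (ltngtP r m) => h.
- have [k ->] : exists k, m = (r + k.+1)%N by exists (m - r).-1; lia.
  have -> : ((r + k.+1).+1 - r.+1 = k.+1)%N by lia.
  have -> : (r + k.+1 - r = k.+1)%N by lia.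
  have -> : (r + k.+1 - r.+1 = k)%N by lia.
  rewrite /csh.
  have -> : ((r.+1 + k.+1).-1 = (r + k).+1)%N by lia.
  have -> : ((r + k.+1).-1 = r + k)%N by lia.
  have -> : ((r.+1 + k).-1 = r + k)%N by lia.
  rewrite binS PoszD !exprS; ring.
- by rewrite mulr0 subr0.
- rewrite -h subSS subnn /csh !expr0 !mul1r !mulr1 !addn0 !bin0.
  by rewrite mulr0 subr0.
Qed.

Lemma rec_uniq a (G H : nat -> nat -> int) :
  (forall m, G 0%N m = H 0%N m) -> (forall r, G r.+1 0%N = 0) -> (forall r, H r.+1 0%N = 0) ->
  (forall r m, G r.+1 m.+1 = G r m - a * G r.+1 m) ->
  (forall r m, H r.+1 m.+1 = H r m - a * H r.+1 m) ->
  forall r m, G r m = H r m.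
Proof.
move=> h0 g0 hh0 gr hr; elim=> [|r IH]; first exact: h0.
elim=> [|m IHm]; first by rewrite g0 hh0.
by rewrite gr hr IH IHm.
Qed.

Lemma Eco_mul a r1 r m :
  \sum_(j < m.+1) Eco a r1 j * Eco a r (m - j)%N = Eco a (r1 + r) m.
Proof.
pose G r m := \sum_(j < m.+1) Eco a r1 j * Eco a r (m - j)%N.
pose H r m := Eco a (r1 + r) m.
apply: (@rec_uniq a G H) => {r m}.
- move=> m; rewrite /G /H addn0 big_ord_recr /= subnn Eco_0l eqxx mulr1.
  rewrite big1 ?add0r // => j _; rewrite Eco_0l subn_eq0 leqNgt ltn_ord mulr0 //.
- by move=> r; rewrite /G big_ord1 Eco_0r mulr0.
- by move=> r; rewrite /H addnS Eco_0r.
- move=> r m; rewrite /G big_ord_recr /= subnn Eco_0r mulr0 addr0.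
  rewrite mulr_sumr -sumrB; apply: eq_bigr => j _.
  rewrite subSn; last by rewrite -ltnS.
  rewrite Eco_rec; ring.
- by move=> r m; rewrite /H !addnS Eco_rec.
Qed.

Lemma Eco_comp a b r m :
  \sum_(j < m.+1) Eco b r j * Eco a j m = Eco (a + b) r m.
Proof.
pose G r m := \sum_(j < m.+1) Eco b r j * Eco a j m.
pose H r m := Eco (a + b) r m.
apply: (@rec_uniq (a + b) G H) => {r m}.
- move=> m; rewrite /G /H big_ord_recl /= Eco_0l eqxx mul1r !Eco_0l.
  by rewrite big1 ?addr0 // => j _; rewrite Eco_0l /= mul0r.
- by move=> r; rewrite /G big_ord1 Eco_0r mul0r.
- by move=> r; rewrite /H Eco_0r.
- move=> r m; rewrite /G big_ord_recl /= Eco_0r mul0r add0r.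
  under eq_bigr => j _ do rewrite /bump /= add1n (Eco_rec a j m).
  have T2 : \sum_(j < m.+1) Eco b r.+1 j.+1 * Eco a j.+1 m =
            \sum_(j < m.+1) Eco b r.+1 j * Eco a j m.
    rewrite [RHS]big_ord_recl /= Eco_0r mul0r add0r.
    rewrite big_ord_recr /= (Eco_small a (ltnSn m)) mulr0 addr0.
    by apply: eq_bigr => j _; rewrite /bump /= add1n.
  have T1 : \sum_(j < m.+1) Eco b r.+1 j.+1 * Eco a j m =
            \sum_(j < m.+1) Eco b r j * Eco a j m - b * \sum_(j < m.+1) Eco b r.+1 j * Eco a j m.
    rewrite mulr_sumr -sumrB; apply: eq_bigr => j _; rewrite Eco_rec; ring.
  have -> : \sum_(j < m.+1) Eco b r.+1 j.+1 * (Eco a j m - a * Eco a j.+1 m) =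
     \sum_(j < m.+1) Eco b r.+1 j.+1 * Eco a j m - a * \sum_(j < m.+1) Eco b r.+1 j.+1 * Eco a j.+1 m.
    rewrite mulr_sumr -sumrB; apply: eq_bigr => j _; ring.
  rewrite T1 T2; ring.
- by move=> r m; rewrite /H Eco_rec.
Qed.

Lemma Eco_zero r m : Eco 0 r m = (r == m)%:R.
Proof.
rewrite /Eco /csh expr0n; case: (ltngtP r m) => h.
- by rewrite subn_eq0 leqNgt h /= mulr0.
- by [].
- by rewrite h subnn /= expr0 !mul1r bin0.
Qed.

Section Shift.
Variable R : nzRingType.
Implicit Types f g : nat -> R.

Lemma shiftE a g m : shift a g m = \sum_(r < m.+1) g r * (Eco a r m)%:~R.
Proof. by apply: eq_bigr => r _; rewrite /Eco -ltnS ltn_ord. Qed.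

Lemma shiftE_wide a g m M : (m < M)%N ->
  shift a g m = \sum_(r < M) g r * (Eco a r m)%:~R.
Proof.
move=> hM; rewrite shiftE; apply: (@sum_widen _ m.+1 M (fun r => g r * (Eco a r m)%:~R)) => // k hk _.
by rewrite Eco_small ?mulr0.
Qed.

Lemma intr_sum N (G : 'I_N -> int) :
  (\sum_(j < N) G j)%:~R = \sum_(j < N) (G j)%:~R :> R.
Proof.
elim: N G => [|N IH] G; first by rewrite !big_ord0.
by rewrite !big_ord_recr /= intrD IH.
Qed.

Lemma cz (x y : R) (z w : int) : x * z%:~R * (y * w%:~R) = x * y * (z * w)%:~R.
Proof.
by rewrite intrM !mulrA -[x * _ * y]mulrA mulrzl -mulrzr !mulrA.
Qed.


Lemma shift_mul a f g : shift a (mulser f g) = mulser (shift a f) (shift a g).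
Proof.
apply: functional_extensionality => m.
transitivity (\sum_(i < m.+1) \sum_(k < m.+1) f i * g k * (Eco a (i + k) m)%:~R).
  rewrite shiftE /mulser.
  under eq_bigr => r _ do rewrite mulr_suml.
  rewrite -(@tri _ m.+1 (fun i k => f i * g k * (Eco a (i + k) m)%:~R)); last first.
    by move=> i k hik; rewrite Eco_small ?mulr0.
  apply: eq_bigr => r _; apply: eq_bigr => i _.
  by rewrite subnKC // -ltnS.
rewrite /mulser.
have e : forall j : 'I_m.+1, shift a f j * shift a g (m - j) =
   \sum_(i < m.+1) \sum_(k < m.+1) f i * (Eco a i j)%:~R * (g k * (Eco a k (m - j))%:~R).
  move=> j; rewrite (@shiftE_wide a f j m.+1) // (@shiftE_wide a g (m - j) m.+1); last by rewrite ltnS leq_subr.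
  by rewrite mulr_suml; apply: eq_bigr => i _; rewrite mulr_sumr.
rewrite (eq_bigr _ (fun j _ => e j)).
rewrite [RHS]exchange_big /=; apply: eq_bigr => i _.
rewrite [RHS]exchange_big /=; apply: eq_bigr => k _.
under [RHS]eq_bigr => j _ do rewrite cz.
by rewrite -mulr_sumr -Eco_mul intr_sum.
Qed.

Lemma shift_shift a b f : shift a (shift b f) = shift (a + b) f.
Proof.
apply: functional_extensionality => m.
rewrite shiftE [RHS]shiftE.
have e : forall j : 'I_m.+1, shift b f j * (Eco a j m)%:~R =
   \sum_(r < m.+1) f r * (Eco b r j)%:~R * (Eco a j m)%:~R.
  by move=> j; rewrite (@shiftE_wide b f j m.+1) // mulr_suml.
rewrite (eq_bigr _ (fun j _ => e j)).
rewrite exchange_big /=; apply: eq_bigr => r _.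
by rewrite -Eco_comp intr_sum mulr_sumr; apply: eq_bigr => j _; rewrite intrM mulrA.
Qed.

Lemma shift0 f : shift 0 f = f.
Proof.
apply: functional_extensionality => m.
rewrite shiftE big_ord_recr /= Eco_zero eqxx mulr1 big1 ?add0r // => r _.
by rewrite Eco_zero /= (ltn_eqF (ltn_ord r)) mulr0.
Qed.

Lemma shift_one a : shift a (@oneser R) = @oneser R.
Proof.
apply: functional_extensionality => m.
rewrite shiftE big_ord_recl /= /oneser eqxx mul1r Eco_0l big1 ?addr0.
  by case: (m == 0%N).
by move=> r _; rewrite mul0r.
Qed.

Lemma shift_big a n (G : 'I_n -> nat -> R) :
  shift a (\big[@mulser R/@oneser R]_(k < n) G k) = \big[@mulser R/@oneser R]_(k < n) shift a (G k).
Proof.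
by rewrite (big_morph (shift a) (@shift_mul a) (shift_one a)).
Qed.

Lemma shift_sum a (I : Type) (r : seq I) (P : pred I) (G : I -> nat -> R) m :
  shift a (fun j => \sum_(i <- r | P i) G i j) m = \sum_(i <- r | P i) shift a (G i) m.
Proof.
rewrite /shift; under eq_bigr => j _ do rewrite mulr_suml.
by rewrite exchange_big.
Qed.

Lemma shift_scale a (z : int) g m :
  shift a (fun j => z%:~R * g j) m = z%:~R * shift a g m.
Proof. by rewrite /shift mulr_sumr; apply: eq_bigr => j _; rewrite mulrA. Qed.

Lemma mulser_suml (I : Type) (r : seq I) (P : pred I) (G : I -> nat -> R) g m :
  mulser (fun j => \sum_(i <- r | P i) G i j) g m = \sum_(i <- r | P i) mulser (G i) g m.
Proof.
rewrite /mulser; under eq_bigr => j _ do rewrite mulr_suml.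
by rewrite exchange_big.
Qed.

Lemma mulser_sumr (I : Type) (r : seq I) (P : pred I) (G : I -> nat -> R) g m :
  mulser g (fun j => \sum_(i <- r | P i) G i j) m = \sum_(i <- r | P i) mulser g (G i) m.
Proof.
rewrite /mulser; under eq_bigr => j _ do rewrite mulr_sumr.
by rewrite exchange_big.
Qed.

Lemma mulser_scalel (z : int) f g m :
  mulser (fun j => z%:~R * f j) g m = z%:~R * mulser f g m.
Proof. by rewrite /mulser mulr_sumr; apply: eq_bigr => j _; rewrite mulrA. Qed.

Lemma mulser_scaler (z : int) f g m :
  mulser f (fun j => z%:~R * g j) m = z%:~R * mulser f g m.
Proof.
rewrite /mulser mulr_sumr; apply: eq_bigr => j _.
by rewrite mulrA mulrzl -mulrzr -mulrA mulrzl -mulrzr mulrA.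
Qed.

End Shift.

Definition invp d (s : 'S_d) : nat :=
  \sum_(i < d) \sum_(j < d) ((i < j) && (s j < s i))%N.

Lemma sum_lt_count d (j : nat) : (\sum_(k < d) ((k < j)%N : nat))%N = minn j d.
Proof.
elim: d => [|d IH]; first by rewrite big_ord0 minn0.
rewrite big_ord_recr /= IH; case: (ltnP d j) => h; lia.
Qed.

Lemma lift_lt_same d (j : 'I_d.+1) (x : 'I_d) : (lift j x < j)%N = (x < j)%N.
Proof. rewrite /= /bump; case: (leqP j x) => h /=; lia. Qed.

Lemma lift_lt_lift d (j : 'I_d.+1) (x y : 'I_d) : (lift j x < lift j y)%N = (x < y)%N.
Proof. rewrite /= /bump; case: (leqP j x); case: (leqP j y) => h1 h2 /=; lia. Qed.

Lemma invp_lift d (j : 'I_d.+1) (s : 'S_d) :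
  invp (lift_perm ord0 j s) = (j + invp s)%N.
Proof.
rewrite /invp big_ord_recl /= big_ord_recl /= add0n.
congr addn.
  under eq_bigr => k _ do rewrite lift_perm_id lift_perm_lift lift_lt_same.
  rewrite -(@reindex_inj _ _ _ _ s xpredT (fun k : 'I_d => ((k < j)%N : nat)) (@perm_inj _ s)) /=.
  rewrite sum_lt_count; apply/minn_idPl; rewrite -ltnS; exact: ltn_ord.
apply: eq_bigr => i _; rewrite big_ord_recl /= add0n.
apply: eq_bigr => k _; rewrite !lift_perm_lift lift_lt_lift.
by rewrite /= /bump /= !add1n ltnS.
Qed.

Lemma perm_decomp d (s : 'S_d.+1) : exists s' : 'S_d, s = lift_perm ord0 (s ord0) s'.
Proof.
pose ulsf (k : 'I_d) : 'I_d := odflt k (unlift (s ord0) (s (lift ord0 k))).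
have ulsfK k : lift (s ord0) (ulsf k) = s (lift ord0 k).
  rewrite /ulsf; have:= neq_lift ord0 k.
  by rewrite -(can_eq (permK s)) => /unlift_some[] ? ? ->.
have inj_ulsf : injective ulsf.
  move=> k1 k2 e; have := congr1 (lift (s ord0)) e; rewrite !ulsfK.
  by move/perm_inj/lift_inj.
exists (perm inj_ulsf); apply/permP => k.
case: (unliftP ord0 k) => [k'|] ->; first by rewrite lift_perm_lift permE ulsfK.
by rewrite lift_perm_id.
Qed.

Lemma odd_invp d (s : 'S_d) : odd (invp s) = odd_perm s.
Proof.
elim: d s => [|d IH] s.
  have -> : s = 1%g by apply/permP => -[].
  by rewrite odd_perm1 /invp big_ord0.
have [s' ->] := perm_decomp s.
by rewrite invp_lift oddD IH odd_lift_perm.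
Qed.

Section SetSeq.
Variable n : nat.
Implicit Types K : {set 'I_n}.

Lemma setseq_sorted K : sorted ltn (setseq K).
Proof.
rewrite /setseq.
have -> : enum K = [seq x <- enum 'I_n | x \in K].
  by rewrite [in RHS]enumT /enum_mem.
rewrite sorted_map; apply: sorted_filter.
  by move=> ? ? ? /=; exact: ltn_trans.
by rewrite -sorted_map val_enum_ord iota_ltn_sorted.
Qed.

Lemma size_setseq K : size (setseq K) = #|K|.
Proof. by rewrite size_map cardE. Qed.

Lemma uniq_setseq K : uniq (setseq K).
Proof. by apply: sorted_uniq (setseq_sorted K); [exact: ltn_trans|exact: ltnn]. Qed.

Lemma mem_setseq K (v : 'I_n) : (val v \in setseq K) = (v \in K).
Proof. by rewrite /setseq (mem_map val_inj) mem_enum. Qed.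

Lemma nth_setseq_lt K i j : (i < #|K|)%N -> (j < #|K|)%N ->
  (nth 0%N (setseq K) i < nth 0%N (setseq K) j)%N = (i < j)%N.
Proof.
move=> hi hj.
have hom := sorted_ltn_nth ltn_trans 0%N (setseq_sorted K).
rewrite -size_setseq in hi hj.
case: (ltngtP i j) => h.
- exact: hom.
- apply/negbTE; rewrite -leqNgt ltnW //; exact: hom.
- by rewrite h ltnn.
Qed.

Lemma inversions_setseq K : inversions (setseq K) = 0%N.
Proof.
rewrite /inversions big1 // => i _; rewrite big1 // => j _.
have hi : (i < #|K|)%N by rewrite -size_setseq ltn_ord.
have hj : (j < #|K|)%N by rewrite -size_setseq ltn_ord.
rewrite nth_setseq_lt //; case: (ltnP i j) => //= h.
by rewrite ltnNge (ltnW h).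
Qed.

End SetSeq.

Definition xs n d (x : {ffun 'I_d -> 'I_n}) : seq nat := [seq val (x k) | k <- enum 'I_d].

Lemma size_xs n d (x : {ffun 'I_d -> 'I_n}) : size (xs x) = d.
Proof. by rewrite size_map size_enum_ord. Qed.

Lemma nth_xs n d (x : {ffun 'I_d -> 'I_n}) (k : 'I_d) : nth 0%N (xs x) k = val (x k).
Proof. by rewrite /xs (nth_map k) ?size_enum_ord // nth_ord_enum. Qed.

Lemma sign_int_A (R : pzRingType) (k : nat) : (((-1) ^+ k : int)%:~R : R) = (-1) ^+ k.
Proof. exact: intr_sign. Qed.

Section Rep.
Variable n d : nat.
Variable K : {set 'I_n}.
Hypothesis hK : #|K| = d.
Variable x0 : 'I_n.

Definition phi (s : 'S_d) : {ffun 'I_d -> 'I_n} := [ffun k => nth x0 (enum K) (s k)].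

Lemma val_phi s k : val (phi s k) = nth 0%N (setseq K) (s k).
Proof. by rewrite ffunE /setseq (nth_map x0) // -cardE hK. Qed.

Lemma phi_inj : injective phi.
Proof.
move=> s1 s2 e; apply/permP => k.
have := congr1 (fun f : {ffun 'I_d -> 'I_n} => val (f k)) e; rewrite /= !val_phi => /eqP.
rewrite nth_uniq ?size_setseq ?hK ?uniq_setseq // => /eqP; exact: val_inj.
Qed.

Lemma fco_phi s : fco K (xs (phi s)) = (-1) ^+ odd_perm s.
Proof.
rewrite /fco.
have exs : xs (phi s) = [seq nth 0%N (setseq K) i | i <- [seq val k | k <- [seq s k | k <- enum 'I_d]]].
  by rewrite /xs -!map_comp; apply: eq_map => k /=; rewrite val_phi.
have -> : perm_eq (setseq K) (xs (phi s)).
  rewrite exs; set l := [seq val k | k <- _].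
  have {1}-> : setseq K = [seq nth 0%N (setseq K) i | i <- iota 0 d].
    by rewrite -hK -size_setseq; exact: (esym (mkseq_nth 0%N _)).
  apply: perm_map; rewrite -val_enum_ord /l; apply: perm_map.
  apply: uniq_perm; first exact: enum_uniq.
    by rewrite (map_inj_uniq (@perm_inj _ s)) enum_uniq.
  move=> k; rewrite mem_enum; symmetry; apply/mapP; exists (s^-1 k)%g; rewrite ?mem_enum //.
  by rewrite permKV.
have -> : inversions (xs (phi s)) = invp s.
  rewrite /inversions /invp size_xs; apply: eq_bigr => i _; apply: eq_bigr => j _.
  by rewrite !nth_xs !val_phi nth_setseq_lt ?hK.
by rewrite -signr_odd odd_invp.
Qed.

Lemma fco_supp (x : {ffun 'I_d -> 'I_n}) : fco K (xs x) != 0 -> exists s, x = phi s.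
Proof.
rewrite /fco; case: ifP => // hp _.
have hu : uniq (xs x) by rewrite -(perm_uniq hp) uniq_setseq.
have hmem : forall k, x k \in enum K.
  by move=> k; rewrite mem_enum -mem_setseq (perm_mem hp) -nth_xs mem_nth ?size_xs.
have hlt : forall k, (index (x k) (enum K) < d)%N.
  by move=> k; have := index_mem (x k) (enum K); rewrite hmem -cardE hK.
have ginj : injective (fun k => Ordinal (hlt k)).
  move=> k1 k2 /(congr1 val) /= e.
  have e2 : x k1 = x k2 by rewrite -(nth_index x0 (hmem k1)) e nth_index.
  apply: ord_inj; apply/eqP; rewrite -(nth_uniq 0%N _ _ hu) ?size_xs // !nth_xs e2 //.
exists (perm ginj); apply/ffunP => k; rewrite ffunE permE /=.
by rewrite nth_index.
Qed.

Lemma rep (V : pzRingType) (W : ('I_d -> nat) -> V) :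
  \sum_(s : 'S_d) (-1) ^+ odd_perm s * W (fun k => nth 0%N (setseq K) (s k)) =
  \sum_(x : {ffun 'I_d -> 'I_n}) (fco K (xs x))%:~R * W (fun k => val (x k)).
Proof.
rewrite (bigID (mem (phi @: [set: 'S_d]))) /=.
rewrite [X in _ + X]big1 ?addr0; last first.
  move=> x hx; case: (eqVneq (fco K (xs x)) 0) => [->|/fco_supp [s e]].
    by rewrite mul0r.
  by move: hx; rewrite e imset_f ?in_setT.
rewrite big_imset /=; last by move=> ? ? _ _; exact: phi_inj.
rewrite [RHS](eq_bigl xpredT) ?big_setT; last by move=> s; rewrite in_setT.
apply: eq_bigr => s _; rewrite fco_phi intr_sign; congr (_ * W _).
by apply: functional_extensionality => k; rewrite val_phi.
Qed.

End Rep.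

Lemma sum_only (T : finType) (V : nmodType) (P : pred T) (F : T -> V) (x : T) :
  (forall y, y != x -> F y = 0) -> \sum_(y | P y) F y = if P x then F x else 0.
Proof.
move=> h; rewrite big_mkcond (bigD1 x) //= big1 ?addr0 // => y hy.
by case: ifP => // _; exact: h.
Qed.

Definition cross (u v : seq nat) : nat := \sum_(x <- u) \sum_(y <- v) (y < x)%N.

Lemma sum_seq_ord (u : seq nat) (F : nat -> nat) :
  \sum_(x <- u) F x = \sum_(i < size u) F (nth 0%N u i).
Proof. by rewrite (big_nth 0%N) big_mkord. Qed.

Lemma inversions_cat u v :
  inversions (u ++ v) = (inversions u + inversions v + cross u v)%N.
Proof.
rewrite /inversions /cross size_cat big_split_ord /=.
rewrite sum_seq_ord.
under eq_bigr => i _ do rewrite big_split_ord /=.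
under [X in (_ + X)%N]eq_bigr => i _ do rewrite big_split_ord /=.
rewrite big_split /= [X in (_ + X)%N]big_split /=.
rewrite [X in (_ + (X + _))%N]big1 ?add0n; last first.
  move=> i _; rewrite big1 // => j _.
  by rewrite /= ltnNge (leq_trans (ltnW (ltn_ord j)) (leq_addr _ _)).
rewrite -!addnA; congr addn.
  apply: eq_bigr => i _; apply: eq_bigr => j _.
  by rewrite /= !nth_cat !ltn_ord.
rewrite addnC; congr addn.
  apply: eq_bigr => i _; apply: eq_bigr => j _.
  by rewrite /= !nth_cat ltn_add2l !ltnNge !leq_addr /= !addKn.
apply: eq_bigr => i _; rewrite sum_seq_ord; apply: eq_bigr => j _.
rewrite /= !nth_cat ltn_ord (leq_trans (ltn_ord i) (leq_addr _ _)) /=.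
have -> : (size u + j < size u)%N = false by rewrite ltnNge leq_addr.
by rewrite addKn.
Qed.

Lemma cross_perm u v u2 v2 : perm_eq u u2 -> perm_eq v v2 -> cross u v = cross u2 v2.
Proof.
move=> hu hv; rewrite /cross (perm_big _ hu); apply: eq_bigr => x _.
exact: perm_big.
Qed.

Lemma inversions_sorted_cat n (U V : {set 'I_n}) :
  inversions (setseq U ++ setseq V) = cross (setseq U) (setseq V).
Proof. by rewrite inversions_cat !inversions_setseq. Qed.

Section FcoSplit.
Variable n : nat.

Lemma fco_nz (I0 : {set 'I_n}) (u' : seq 'I_n) :
  fco I0 (map val u') != 0 -> I0 = [set x in u'].
Proof.
rewrite /fco; case: ifP => // hp _; apply/setP => x.
by rewrite inE -mem_setseq (perm_mem hp) (mem_map val_inj).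
Qed.

Lemma fco_set (u' : seq 'I_n) : uniq u' ->
  perm_eq (setseq [set x in u']) (map val u').
Proof.
move=> hu; apply: uniq_perm; first exact: uniq_setseq.
  by rewrite (map_inj_uniq val_inj).
move=> y; apply/idP/idP.
  move=> hy; have : y \in setseq [set x in u'] := hy.
  rewrite /setseq => /mapP [z]; rewrite mem_enum inE => hz ->.
  exact: map_f.
move=> /mapP [z hz ->]; rewrite mem_setseq inE //.
Qed.

Lemma fco_uniq (I0 : {set 'I_n}) (u : seq nat) : fco I0 u != 0 -> uniq u.
Proof.
by rewrite /fco; case: ifP => // hp _; rewrite -(perm_uniq hp) uniq_setseq.
Qed.

Lemma fco_split (K : {set 'I_n}) (a p : nat) (u' v' : seq 'I_n) :
  size u' = a -> size v' = p ->
  fco K (map val u' ++ map val v') =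
  \sum_(I0 : {set 'I_n} | #|I0| == a) \sum_(L0 : {set 'I_n} | #|L0| == p)
     fco K (setseq I0 ++ setseq L0) * fco I0 (map val u') * fco L0 (map val v').
Proof.
move=> hu hv.
set U := [set x in u']; set Vs := [set x in v'].
rewrite (@sum_only _ _ _ _ U); last first.
  move=> I0 hI0; rewrite big1 // => L0 _.
  case: (eqVneq (fco I0 (map val u')) 0) => [->|/fco_nz e]; first by rewrite mulr0 mul0r.
  by rewrite e eqxx in hI0.
rewrite (@sum_only _ _ _ _ Vs); last first.
  move=> L0 hL0.
  case: (eqVneq (fco L0 (map val v')) 0) => [->|/fco_nz e]; first by rewrite mulr0.
  by rewrite e eqxx in hL0.
case: (eqVneq (fco U (map val u')) 0) => [h0|hnu].
  rewrite h0 mulr0 mul0r !if_same.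
  rewrite /fco; case: ifP => // hp.
  have : uniq (map val u') by move: (uniq_setseq K); rewrite (perm_uniq hp) cat_uniq => /and3P [].
  rewrite (map_inj_uniq val_inj) => /fco_set; rewrite -/U => hp2.
  by move: h0; rewrite /fco hp2 => /eqP; rewrite signr_eq0.
case: (eqVneq (fco Vs (map val v')) 0) => [h0|hnv].
  rewrite h0 mulr0 !if_same.
  rewrite /fco; case: ifP => // hp.
  have : uniq (map val v') by move: (uniq_setseq K); rewrite (perm_uniq hp) cat_uniq => /and3P [].
  rewrite (map_inj_uniq val_inj) => /fco_set; rewrite -/Vs => hp2.
  by move: h0; rewrite /fco hp2 => /eqP; rewrite signr_eq0.
have uu := fco_uniq hnu; have uv := fco_uniq hnv.
rewrite (map_inj_uniq val_inj) in uu; rewrite (map_inj_uniq val_inj) in uv.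
have pu := fco_set uu; have pv := fco_set uv.
have -> : #|U| == a by rewrite -hu -size_setseq (perm_size pu) size_map.
have -> : #|Vs| == p by rewrite -hv -size_setseq (perm_size pv) size_map.
have pc : perm_eq (setseq U ++ setseq Vs) (map val u' ++ map val v') by rewrite perm_cat.
rewrite /fco pu pv (permPr pc); case: ifP => _; last by rewrite !mul0r.
rewrite inversions_cat inversions_sorted_cat (cross_perm pu pv) !exprD; ring.
Qed.

End FcoSplit.

Lemma intr_sumg (R : pzRingType) (I : Type) (r : seq I) (P : pred I) (G : I -> int) :
  (\sum_(i <- r | P i) G i)%:~R = \sum_(i <- r | P i) (G i)%:~R :> R.
Proof. by elim/big_rec2: _ => // i y1 y2 _ <-; rewrite intrD. Qed.

Section Join.
Variables (n a p : nat).

Definition join (y : {ffun 'I_a -> 'I_n}) (z : {ffun 'I_p -> 'I_n}) : {ffun 'I_(a + p) -> 'I_n} :=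
  [ffun k => match split k with inl i => y i | inr j => z j end].

Lemma join_l y z (i : 'I_a) : join y z (lshift p i) = y i.
Proof. by rewrite ffunE (unsplitK (inl _ i)). Qed.

Lemma join_r y z (j : 'I_p) : join y z (rshift a j) = z j.
Proof. by rewrite ffunE (unsplitK (inr _ j)). Qed.

Lemma sum_join (V : nmodType) (F : {ffun 'I_(a + p) -> 'I_n} -> V) :
  \sum_x F x = \sum_y \sum_z F (join y z).
Proof.
rewrite pair_big /=.
pose h (yz : {ffun 'I_a -> 'I_n} * {ffun 'I_p -> 'I_n}) := join yz.1 yz.2.
pose g (x : {ffun 'I_(a + p) -> 'I_n}) :=
  ([ffun i => x (lshift p i)], [ffun j => x (rshift a j)]).
have hb : bijective h.
  exists g.
    move=> [y z]; rewrite /g /h /=; congr pair; apply/ffunP => i; rewrite ffunE.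
      exact: join_l.
    exact: join_r.
  move=> x; apply/ffunP => k; rewrite /g /h /= ffunE.
  by rewrite -{2}(splitK k); case: (split k) => i; rewrite /= ffunE.
by rewrite (reindex h (onW_bij _ hb)).
Qed.

Lemma xs_join y z : xs (join y z) = xs y ++ xs z.
Proof.
apply: (@eq_from_nth _ 0%N); first by rewrite size_cat !size_xs.
move=> i; rewrite size_xs => hi.
rewrite (nth_xs _ (Ordinal hi)) nth_cat size_xs.
case: (splitP (Ordinal hi)) => [i' /= ei|j' /= ei].
  have -> : Ordinal hi = lshift p i' by apply: ord_inj.
  by rewrite join_l ei nth_xs.
have -> : Ordinal hi = rshift a j' by apply: ord_inj.
by rewrite join_r ei addKn nth_xs.
Qed.

End Join.

Section Laplace.
Variable R : nzRingType.
Variable t : nat -> nat -> nat -> R.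

Definition Pr d (w c : 'I_d -> nat) : nat -> R :=
  \big[@mulser R/@oneser R]_(k < d) shift (- (k : nat)%:Z) (fun r => tco t r (w k) (c k)).

Lemma minor_rep n (K : {set 'I_n}) (J : seq nat) (x0 : 'I_n) m :
  #|K| = size J ->
  minor t (setseq K) J m =
  \sum_(x : {ffun 'I_(size J) -> 'I_n}) (fco K (xs x))%:~R *
      Pr (fun k => val (x k)) (fun k => nth 0%N J k) m.
Proof.
move=> hK; rewrite /minor.
exact: (rep hK x0 (fun w => Pr w (fun k => nth 0%N J k) m)).
Qed.

Lemma Pr_split a p (w c : 'I_(a + p) -> nat) :
  Pr w c = mulser (Pr (fun k => w (lshift p k)) (fun k => c (lshift p k)))
                  (shift (- a%:Z) (Pr (fun k => w (rshift a k)) (fun k => c (rshift a k)))).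
Proof.
rewrite /Pr big_split_ord /= shift_big; congr mulser.
apply: eq_bigr => k _; rewrite shift_shift; congr shift.
by rewrite /= PoszD opprD addrC.
Qed.


Lemma Pr_ext d (w w' c c' : 'I_d -> nat) :
  (forall k, w k = w' k) -> (forall k, c k = c' k) -> Pr w c = Pr w' c'.
Proof. by move=> hw hc; apply: eq_bigr => k _; rewrite hw hc. Qed.

Lemma xs_map n d (y : {ffun 'I_d -> 'I_n}) : xs y = map val [seq y k | k <- enum 'I_d].
Proof. by rewrite /xs map_comp. Qed.

Lemma laplace_aux n (K : {set 'I_n}) (J1 J2 : seq nat) m :
  let a := size J1 in let p := size J2 in
  \sum_(x : {ffun 'I_(a + p) -> 'I_n}) (fco K (xs x))%:~R *
      Pr (fun k => val (x k)) (fun k => nth 0%N (J1 ++ J2) k) m =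
  \sum_(y : {ffun 'I_a -> 'I_n}) \sum_(z : {ffun 'I_p -> 'I_n})
    (\sum_(I0 : {set 'I_n} | #|I0| == a) \sum_(L0 : {set 'I_n} | #|L0| == p)
       fco K (setseq I0 ++ setseq L0) * fco I0 (xs y) * fco L0 (xs z))%:~R *
    mulser (Pr (fun k => val (y k)) (fun k => nth 0%N J1 k))
      (shift (- a%:Z) (Pr (fun k => val (z k)) (fun k => nth 0%N J2 k))) m.
Proof.
move=> a p; rewrite sum_join; apply: eq_bigr => y _; apply: eq_bigr => z _.
rewrite xs_join (xs_map y) (xs_map z).
rewrite (@fco_split n K a p); rewrite ?size_map ?size_enum_ord //.
rewrite -!xs_map Pr_split; congr (_ * mulser _ _ m).
  apply: Pr_ext => k; first by rewrite join_l.
  by rewrite /= nth_cat ltn_ord.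
congr shift; apply: Pr_ext => k; first by rewrite join_r.
  by rewrite /= nth_cat ltnNge leq_addr /= addKn.
all: by rewrite -enumT size_enum_ord.
Qed.

Lemma laplace n (K : {set 'I_n}) (J1 J2 : seq nat) (x0 : 'I_n) m :
  #|K| = (size J1 + size J2)%N ->
  minor t (setseq K) (J1 ++ J2) m =
  \sum_(I0 : {set 'I_n} | #|I0| == size J1) \sum_(L0 : {set 'I_n} | #|L0| == size J2)
     (fco K (setseq I0 ++ setseq L0))%:~R *
     mulser (minor t (setseq I0) J1) (shift (- (size J1)%:Z) (minor t (setseq L0) J2)) m.
Proof.
move=> hK; rewrite (@minor_rep n K _ x0); last by rewrite size_cat.
have := laplace_aux K J1 J2 m; move: (size_cat J1 J2) => /=.
move: (size (J1 ++ J2)) => N eN; subst N => ->.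
set a := size J1; set p := size J2.
set Py := fun y : {ffun 'I_a -> 'I_n} => Pr (fun k => val (y k)) (fun k => nth 0%N J1 k).
set Qz := fun z : {ffun 'I_p -> 'I_n} => Pr (fun k => val (z k)) (fun k => nth 0%N J2 k).
have eP : forall I0 : {set 'I_n}, #|I0| == a -> minor t (setseq I0) J1 =
    fun j => \sum_y (fco I0 (xs y))%:~R * Py y j.
  move=> I0 /eqP h; apply: functional_extensionality => j.
  exact: (@minor_rep n I0 J1 x0 j h).
have eQ : forall L0 : {set 'I_n}, #|L0| == p -> shift (- a%:Z) (minor t (setseq L0) J2) =
    fun j => \sum_z (fco L0 (xs z))%:~R * shift (- a%:Z) (Qz z) j.
  move=> L0 /eqP h; apply: functional_extensionality => j.
  have -> : minor t (setseq L0) J2 = fun j => \sum_z (fco L0 (xs z))%:~R * Qz z j.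
    by apply: functional_extensionality => i; exact: (@minor_rep n L0 J2 x0 i h).
  rewrite shift_sum; apply: eq_bigr => z _; exact: shift_scale.
symmetry.
transitivity (\sum_(I0 : {set 'I_n} | #|I0| == a) \sum_(L0 : {set 'I_n} | #|L0| == p)
   \sum_y \sum_z (fco K (setseq I0 ++ setseq L0))%:~R * ((fco I0 (xs y))%:~R *
      ((fco L0 (xs z))%:~R * mulser (Py y) (shift (- a%:Z) (Qz z)) m))).
  apply: eq_bigr => I0 hI0; apply: eq_bigr => L0 hL0.
  rewrite (eP I0 hI0) (eQ L0 hL0) mulser_suml mulr_sumr; apply: eq_bigr => y _.
  rewrite mulser_scalel mulser_sumr mulr_sumr mulr_sumr; apply: eq_bigr => z _.
  by rewrite mulser_scaler.
symmetry.
under eq_bigr => y _ do under eq_bigr => z _ do rewrite intr_sumg mulr_suml.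
under eq_bigr => y _ do under eq_bigr => z _ do under eq_bigr => I0 _ do rewrite intr_sumg mulr_suml.
under eq_bigr => y _ do rewrite exchange_big.
rewrite exchange_big; apply: eq_bigr => I0 _.
under eq_bigr => y _ do rewrite exchange_big.
rewrite exchange_big; apply: eq_bigr => L0 _.
apply: eq_bigr => y _; apply: eq_bigr => z _.
by rewrite !intrM !mulrA.
Qed.

End Laplace.

Section Final.
Variable R : nzRingType.
Variable t : nat -> nat -> nat -> R.

Definition Xs (s : nat) : nat -> R := fun j => (j == s)%:R.

Lemma mulser_Xl s (g : nat -> R) m : mulser (Xs s) g m = if (s <= m)%N then g (m - s)%N else 0.
Proof.
rewrite /mulser /Xs; case: leqP => hs.
  have hs' : (s < m.+1)%N by rewrite ltnS.
  rewrite (bigD1 (Ordinal hs')) //= eqxx mul1r big1 ?addr0 // => i hi.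
  have -> : (i == s :> nat) = false.
    by apply/negbTE; move: hi; apply: contra => /eqP e; apply/eqP/ord_inj.
  by rewrite mul0r.
rewrite big1 // => i _.
have -> : (i == s :> nat) = false.
  by apply/negbTE; rewrite neq_ltn (leq_trans (ltn_ord i)).
by rewrite mul0r.
Qed.

Lemma mulser_rev (f g : nat -> R) m : mulser f g m = \sum_(i < m.+1) f (m - i)%N * g i.
Proof.
rewrite /mulser (reindex_inj rev_ord_inj) /=.
by apply: eq_bigr => i _; rewrite subSS subKn // -ltnS.
Qed.

Lemma mulser_Xcomm s (g : nat -> R) : mulser g (Xs s) = mulser (Xs s) g.
Proof.
apply: functional_extensionality => m.
rewrite mulser_rev /mulser; apply: eq_bigr => i _.
by rewrite /Xs mulr_natr mulr_natl.
Qed.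

Lemma Xs0 : Xs 0 = @oneser R.
Proof. by []. Qed.

Lemma shift_X a s j : shift a (Xs s) j = (Eco a s j)%:~R.
Proof.
rewrite shiftE /Xs; case: (leqP s j) => hs.
  have hs' : (s < j.+1)%N by rewrite ltnS.
  rewrite (bigD1 (Ordinal hs')) //= eqxx mul1r big1 ?addr0 // => i hi.
  have -> : (i == s :> nat) = false.
    by apply/negbTE; move: hi; apply: contra => /eqP e; apply/eqP/ord_inj.
  by rewrite mul0r.
rewrite Eco_small // big1 // => i _.
have -> : (i == s :> nat) = false.
  by apply/negbTE; rewrite neq_ltn (leq_trans (ltn_ord i)).
by rewrite mul0r.
Qed.

Lemma rhoC_eq n k J r (K : {set 'I_n}) s :
  rhoC k t J r K s = if #|K| == k then mulser (Xs s) (minor t (setseq K) J) r else 0.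
Proof.
rewrite /rhoC mulser_Xl; case: (#|K| == k) => //=.
Qed.

Lemma rho_h_eq n k a J m (K : {set 'I_n}) s :
  rho_h k t a J m K s =
  if #|K| == k then shift a (mulser (Xs s) (minor t (setseq K) J)) m else 0.
Proof.
rewrite /rho_h; case: ifP => hK.
  rewrite /shift; apply: eq_bigr => r _.
  by rewrite rhoC_eq hK mulrzl -mulrzr.
by apply: big1 => r _; rewrite rhoC_eq hK mulr0.
Qed.

Lemma rho_g_eq n k1 k2 a (I L : {set 'I_n}) m (K1 : {set 'I_n}) s1 (K2 : {set 'I_n}) s2 :
  rho_g k1 k2 t a I L m K1 s1 K2 s2 =
  if #|K1| == k1 then if #|K2| == k2 then
    mulser (shift a (mulser (Xs s1) (minor t (setseq K1) (setseq I))))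
           (mulser (Xs s2) (minor t (setseq K2) (setseq L))) m
  else 0 else 0.
Proof.
rewrite /rho_g /rhoCC.
case: (eqVneq #|K1| k1) => h1; last first.
  by apply: big1 => s _; apply: big1 => r _; rewrite rhoC_eq (negbTE h1) mul0r mulr0.
case: (eqVneq #|K2| k2) => h2; last first.
  by apply: big1 => s _; apply: big1 => r _; rewrite (rhoC_eq _ _ _ K2) (negbTE h2) mulr0 mulr0.
rewrite /mulser (reindex_inj rev_ord_inj) /=.
apply: eq_bigr => s _.
rewrite subSS subKn; last by rewrite -ltnS.
rewrite /shift mulr_suml.
apply: eq_bigr => r _.
rewrite !rhoC_eq h1 h2 !eqxx.
by rewrite mulrA mulrzl -mulrzr.
Qed.

Lemma sum_g_eq n k1 k2 a N (c : {set 'I_n} -> {set 'I_n} -> nat -> R)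
  (K1 : {set 'I_n}) s1 (K2 : {set 'I_n}) s2 :
  sum_g k1 k2 a N c K1 s1 K2 s2 =
  if #|K1| == k1 then if #|K2| == k2 then
    \sum_(m' < N) (if (s1 + s2 <= m')%N then csh a s1 (m' - s2 - s1) else 0)%:~R * c K1 K2 m'
  else 0 else 0.
Proof.
rewrite /sum_g (@sum_only _ _ _ _ K1); last first.
  move=> I0 hI0; apply: big1 => L0 _; apply: big1 => m' _.
  by rewrite /gco eq_sym (negbTE hI0) /= mul0r.
case: ifP => // _.
rewrite (@sum_only _ _ _ _ K2); last first.
  move=> L0 hL0; apply: big1 => m' _.
  have h' : (K2 == L0) = false by rewrite eq_sym (negbTE hL0).
  by rewrite /gco eqxx h' /= mul0r.
case: ifP => // _.
by apply: eq_bigr => m' _; rewrite /gco !eqxx.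
Qed.

Lemma sum_h_eq n k1 k2 a N (c : {set 'I_n} -> {set 'I_n} -> nat -> R) (K : {set 'I_n}) s :
  sum_h k1 k2 a N c K s =
  \sum_(I0 : {set 'I_n} | #|I0| == k1) \sum_(L0 : {set 'I_n} | #|L0| == k2)
     (fco K (setseq I0 ++ setseq L0))%:~R * sum_g k1 k2 a N c I0 s L0 0.
Proof.
rewrite /sum_h; apply: eq_bigr => I0 h1; apply: eq_bigr => L0 h2.
rewrite sum_g_eq h1 h2 mulr_sumr; apply: eq_bigr => m' _.
rewrite /hco addn0 subn0 mulrA -intrM; congr (_ * _); congr intmul.
by case: ifP => _; rewrite ?mulr0 // mulrC.
Qed.

End Final.

Lemma mulser_def (R : pzRingType) (f g : nat -> R) m :
  mulser f g m = \sum_(i < m.+1) f i * g (m - i)%N.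
Proof. by []. Qed.

Unset Implicit Arguments.
Theorem mainTheorem7 (F : fieldType) (HF : [pchar F] =i pred0)
  (A : algType F) (n d p : nat) (t : nat -> nat -> nat -> A) :
  (1 <= p)%N -> (p < d)%N -> (d <= n)%N ->
  yangian_rel n t ->
  forall (I L : {set 'I_n}), #|I| = (d - p)%N -> #|L| = p ->
  forall m : nat,
    (* rho(g_{I,L,m}) lies in C_n(d-p; d-p, p) (x) Y_n *)
    (exists (N : nat) (c : {set 'I_n} -> {set 'I_n} -> nat -> A),
       forall K1 s1 K2 s2,
         rho_g (d - p) p t (d - p)%:Z I L m K1 s1 K2 s2
         = sum_g (d - p) p (d - p)%:Z N c K1 s1 K2 s2) /\
    (* and (mu (x) id) rho = rho mu on the generator g_{I,L,m} *)
    (forall (N : nat) (c : {set 'I_n} -> {set 'I_n} -> nat -> A),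
       (forall K1 s1 K2 s2,
         rho_g (d - p) p t (d - p)%:Z I L m K1 s1 K2 s2
         = sum_g (d - p) p (d - p)%:Z N c K1 s1 K2 s2) ->
       forall K s,
         rho_h d t (d - p)%:Z (setseq I ++ setseq L) m K s
         = sum_h (d - p) p (d - p)%:Z N c K s).
Proof.
move=> hp1 hpd hdn _ I L hI hL m.
set a := (d - p)%N.
have hn : (0 < n)%N by apply: leq_trans hdn; apply: leq_trans hpd.
pose x0 : 'I_n := Ordinal hn.
pose P (I0 : {set 'I_n}) := minor t (setseq I0) (setseq I).
pose Q (L0 : {set 'I_n}) := minor t (setseq L0) (setseq L).
split.
  exists m.+1, (fun I0 L0 m' => mulser (shift a%:Z (P I0)) (Q L0) (m - m')%N).
  move=> K1 s1 K2 s2.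
  rewrite rho_g_eq sum_g_eq.
  case: ifP => // _; case: ifP => // _.
  transitivity (mulser (mulser (shift a%:Z (@Xs A s1)) (@Xs A s2))
                       (mulser (shift a%:Z (P K1)) (Q K2)) m).
    rewrite shift_mul -!mulserA; congr (mulser _ _ m).
    by rewrite !mulserA mulser_Xcomm.
  rewrite [LHS]mulser_def; apply: eq_bigr => m' _.
  congr (_ * _).
  rewrite mulser_Xcomm mulser_Xl.
  case: (leqP s2 m') => h2.
    rewrite shift_X /Eco leq_subRL // addnC.
    by case: ifP => //; rewrite subnDA.
  by rewrite leqNgt (leq_trans h2 (leq_addl _ _)).
move=> N c H K s.
rewrite sum_h_eq.
under eq_bigr => I0 h1 do under eq_bigr => L0 h2 do rewrite -H rho_g_eq h1 h2 /= Xs0 mul1ser.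
rewrite rho_h_eq; case: ifP => hK; last first.
  symmetry; apply: big1 => I0 h1; apply: big1 => L0 h2.
  rewrite /fco; case: ifP => hp'; last by rewrite mul0r.
  have := perm_size hp'; rewrite size_cat !size_setseq (eqP h1) (eqP h2) subnK; last exact: ltnW.
  by move=> e; rewrite e eqxx in hK.
have hK' : #|K| = (size (setseq I) + size (setseq L))%N.
  by rewrite !size_setseq hI hL subnK ?(eqP hK) //; exact: ltnW.
have eM : minor t (setseq K) (setseq I ++ setseq L) = fun j =>
   \sum_(I0 : {set 'I_n} | #|I0| == a) \sum_(L0 : {set 'I_n} | #|L0| == p)
     (fco K (setseq I0 ++ setseq L0))%:~R * mulser (P I0) (shift (- a%:Z) (Q L0)) j.
  apply: functional_extensionality => j; rewrite (laplace t x0 j hK').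
  by rewrite !size_setseq hI hL.
have e2 : mulser (@Xs A s) (minor t (setseq K) (setseq I ++ setseq L)) = fun j =>
   \sum_(I0 : {set 'I_n} | #|I0| == a) \sum_(L0 : {set 'I_n} | #|L0| == p)
     (fco K (setseq I0 ++ setseq L0))%:~R *
       mulser (@Xs A s) (mulser (P I0) (shift (- a%:Z) (Q L0))) j.
  apply: functional_extensionality => j; rewrite eM mulser_sumr; apply: eq_bigr => I0 _.
  rewrite mulser_sumr; apply: eq_bigr => L0 _; exact: mulser_scaler.
rewrite e2 shift_sum; apply: eq_bigr => I0 _.
rewrite shift_sum; apply: eq_bigr => L0 _.
rewrite shift_scale; congr (_ * _).
by rewrite mulserA shift_mul shift_shift addrN shift0.
Qed.
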